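(* For every integer $d\ge 1$, the Euclidean space $\mathbb R^d$ and the $d$-dimensional real hyperbolic space $\mathbb H^d$ are almost-isometry unique.
   Context: For $\lambda>1$, an injection $f$ between metric spaces is $\lambda$-bi-Lipschitz if for all distinct $a,b$ in its domain, $d(f(a),f(b))<\lambda d(a,b)$ and $d(a,b)<\lambda d(f(a),f(b))$. Two metric spaces $X,Y$ are almost isometric if for every $\lambda>1$ there is a $\lambda$-bi-Lipschitz bijection from $X$ onto $Y$. A metric space $X$ is almost-isometry unique if every metric space almost isometric to $X$ is isometric to $X$. *)

(* Defs.v *)
From Stdlib Require Import Reals.
From mathcomp Require Import all_boot all_order all_algebra.
From mathcomp Require Import Rstruct.

Set Implicit Arguments.
Unset Strict Implicit.
Unset Printing Implicit Defensive.

Import GRing.Theory Num.Theory.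

Local Open Scope ring_scope.

Record metric_space := MetricSpace {
  mcarrier :> Type;
  mdist : mcarrier -> mcarrier -> R;
  mdist_self : forall x, mdist x x = 0;
  mdist_pos : forall x y, x <> y -> 0 < mdist x y;
  mdist_sym : forall x y, mdist x y = mdist y x;
  mdist_tri : forall x y z, mdist x z <= mdist x y + mdist y z
}.

Definition bi_lipschitz (X Y : Type) (dX : X -> X -> R) (dY : Y -> Y -> R)
  (lam : R) (f : X -> Y) : Prop :=
  injective f /\
  forall a b, a <> b ->
    dY (f a) (f b) < lam * dX a b /\ dX a b < lam * dY (f a) (f b).

Definition almost_isometric (X Y : Type) (dX : X -> X -> R) (dY : Y -> Y -> R)
  : Prop :=
  forall lam : R, 1 < lam ->
    exists f : X -> Y, bijective f /\ bi_lipschitz dX dY lam f.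

Definition isometric (X Y : Type) (dX : X -> X -> R) (dY : Y -> Y -> R) : Prop :=
  exists f : X -> Y, bijective f /\ forall a b, dY (f a) (f b) = dX a b.

Definition almost_isometry_unique (X : Type) (dX : X -> X -> R) : Prop :=
  forall Y : metric_space,
    almost_isometric dX (@mdist Y) -> isometric dX (@mdist Y).

Definition euclid (d : nat) : Type := 'I_d -> R.

Definition euclid_dist (d : nat) (x y : euclid d) : R :=
  sqrt (\sum_(i < d) (x i - y i) ^+ 2).

(** Real hyperbolic space H^d, hyperboloid model:
    { (t, v) in R x R^d | t > 0, t^2 - |v|^2 = 1 },
    with distance arcosh(t s - <v, w>). *)
Definition minkowski (d : nat) (p q : R * ('I_d -> R)) : R :=
  p.1 * q.1 - \sum_(i < d) p.2 i * q.2 i.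

Definition hyperbolic (d : nat) : Type :=
  { p : R * ('I_d -> R) | 0 < p.1 /\ minkowski p p = 1 }.

Definition arcosh (t : R) : R := ln (t + sqrt (t ^+ 2 - 1)).

Definition hyperbolic_dist (d : nat) (x y : hyperbolic d) : R :=
  arcosh (minkowski (sval x) (sval y)).

(* Main.v *)
Require Import Defs.
From Stdlib Require Import Reals.
From mathcomp Require Import all_boot all_order all_algebra.
From mathcomp Require Import Rstruct.
From mathcomp Require Import ring lra.
From mathcomp Require Import boolp classical_sets filter.
Import Order.TTheory GRing.Theory Num.Theory.
Local Open Scope ring_scope.
Set Implicit Arguments.
Unset Strict Implicit.

Record ufilter (U : (nat -> Prop) -> Prop) : Prop := UF {
  uf_mono : forall P Q : nat -> Prop, (forall n, P n -> Q n) -> U P -> U Q;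
  uf_and : forall P Q, U P -> U Q -> U (fun n => P n /\ Q n);
  uf_ne : forall P, U P -> exists n, P n;
  uf_ultra : forall P, U P \/ U (fun n => ~ P n);
  uf_cof : forall N, U (fun n => (N <= n)%N)
}.

Definition Ulim (U : (nat -> Prop) -> Prop) (u : nat -> R) (L : R) :=
  forall e : R, 0 < e -> U (fun n => `|u n - L| < e).

Lemma Ulim_le U (HU : ufilter U) u v L M :
  Ulim U u L -> Ulim U v M -> (forall n, u n <= v n) -> L <= M.
Proof.
move=> hu hv uv; case: (lerP L M) => // ML.
have e0 : 0 < (L - M) / 2 by lra.
have [n [h1 h2]] := uf_ne HU (uf_and HU (hu _ e0) (hv _ e0)).
have := uv n; move: h1 h2; rewrite !ltr_norml; lra.
Qed.

Lemma Ulim_leU U (HU : ufilter U) u L c :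
  Ulim U u L -> U (fun n => u n <= c) -> L <= c.
Proof.
move=> hu hc; case: (lerP L c) => // cL.
have e0 : 0 < (L - c) by lra.
have [n [h1 h2]] := uf_ne HU (uf_and HU (hu _ e0) hc).
move: h1 h2; rewrite !ltr_norml; lra.
Qed.

Lemma Ulim_lt U (HU : ufilter U) u L c :
  Ulim U u L -> L < c -> U (fun n => u n < c).
Proof.
move=> hu Lc; have e0 : 0 < c - L by lra.
apply: (uf_mono HU _ (hu _ e0)) => n; rewrite ltr_norml; lra.
Qed.

Lemma Ulim_cst U (HU : ufilter U) c : Ulim U (fun _ => c) c.
Proof.
move=> e e0; apply: (uf_mono HU _ (uf_cof HU 0)) => n _.
by rewrite subrr normr0.
Qed.

Lemma Ulim_uniq U (HU : ufilter U) u L M : Ulim U u L -> Ulim U u M -> L = M.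
Proof.
move=> h1 h2; apply/eqP; rewrite eq_le.
by rewrite (Ulim_le HU h1 h2) ?(Ulim_le HU h2 h1).
Qed.

Lemma Ulim_add U (HU : ufilter U) u v L M :
  Ulim U u L -> Ulim U v M -> Ulim U (fun n => u n + v n) (L + M).
Proof.
move=> hu hv e e0; have e2 : 0 < e / 2 by lra.
rewrite RplusE.
apply: (uf_mono HU _ (uf_and HU (hu _ e2) (hv _ e2))) => n [].
rewrite !ltr_norml => /andP[? ?] /andP[? ?]; apply/andP; split; lra.
Qed.

Lemma Ulim_opp U (HU : ufilter U) u L :
  Ulim U u L -> Ulim U (fun n => - u n) (- L).
Proof.
move=> hu e e0; apply: (uf_mono HU _ (hu _ e0)) => n.
by rewrite RoppE -opprD normrN.
Qed.

Lemma Ulim_mul U (HU : ufilter U) u v L M :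
  Ulim U u L -> Ulim U v M -> Ulim U (fun n => u n * v n) (L * M).
Proof.
move=> hu hv e e0; rewrite RmultE.
pose K := `|L| + `|M| + 1.
have K1 : 1 <= K by rewrite /K; have := normr_ge0 L; have := normr_ge0 M; lra.
pose d := Num.min 1 (e / (2 * K)).
have d0 : 0 < d by rewrite /d lt_min ltr01 /= divr_gt0 //; lra.
have d1 : d <= 1 by rewrite /d ge_min lexx.
have dK : d * K <= e / 2.
  have : d <= e / (2 * K) by rewrite /d ge_min lexx orbT.
  rewrite ler_pdivlMr; last by lra.
  move=> h; rewrite mulrC; lra.
apply: (uf_mono HU _ (uf_and HU (hu _ d0) (hv _ d0))) => n [h1 h2].
have -> : u n * v n - L * M = (u n - L) * (v n - M) + (u n - L) * M + L * (v n - M)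
  by ring.
have a1 : `|(u n - L) * (v n - M)| <= d * d.
  by rewrite normrM; apply: ler_pM => //; apply: ltW.
have a2 : `|(u n - L) * M| <= d * `|M|.
  by rewrite normrM; apply: ler_pM => //; apply: ltW.
have a3 : `|L * (v n - M)| <= `|L| * d.
  by rewrite normrM; apply: ler_pM => //; apply: ltW.
have t := ler_normD ((u n - L) * (v n - M) + (u n - L) * M) (L * (v n - M)).
have t2 := ler_normD ((u n - L) * (v n - M)) ((u n - L) * M).
have : d * d <= d by rewrite -[leRHS]mulr1 ler_pM // ltW.
have : d * K = d * `|L| + d * `|M| + d by rewrite /K; ring.
move: dK; nra.
Qed.

Lemma Ulim_sum U (HU : ufilter U) (k : nat) (F : 'I_k -> nat -> R) (L : 'I_k -> R) :
  (forall i, Ulim U (F i) (L i)) ->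
  Ulim U (fun n => \sum_(i < k) F i n) (\sum_(i < k) L i).
Proof.
elim: k F L => [|k IH] F L hF.
  under eq_fun do rewrite big_ord0; rewrite big_ord0; exact: Ulim_cst.
under eq_fun do rewrite big_ord_recr /=; rewrite big_ord_recr /=.
apply: Ulim_add => //; first exact: (IH (fun i => F (widen_ord (leqnSn k) i))).
Qed.

Lemma Ulim_ex U (HU : ufilter U) (u : nat -> R) (B : R) :
  (forall n, `|u n| <= B) -> exists L, Ulim U u L.
Proof.
move=> hB.
pose E := fun r : R => U (fun n => r <= u n).
have bE : bound E.
  exists B => r Er; apply/RleP.
  have [n h] := uf_ne HU Er; have := hB n; rewrite ler_norml; lra.
have nE : exists x, E x.
  exists (- B); apply: (uf_mono HU _ (uf_cof HU 0)) => n _.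
  by have := hB n; rewrite ler_norml; lra.
have [L [ub lub]] := completeness E bE nE.
exists L => e e0.
have h1 : U (fun n => L - e < u n).
  case: (pselect (exists r, E r /\ L - e < r)) => [[r [Er lr]]|nx].
    by apply: (uf_mono HU _ Er) => n; lra.
  have : is_upper_bound E (L - e).
    move=> r Er; apply/RleP; case: (lerP r (L - e)) => // lr.
    by exfalso; apply: nx; exists r.
  by move/lub/RleP; rewrite RminusE; lra.
have h2 : U (fun n => u n < L + e).
  case: (uf_ultra HU (fun n => L + e <= u n)) => [EL|H].
    by have := ub _ EL; move/RleP; lra.
  by apply: (uf_mono HU _ H) => n; rewrite ltNge => /negP.
apply: (uf_mono HU _ (uf_and HU h1 h2)) => n [? ?].
rewrite ltr_norml; apply/andP; split; lra.
Qed.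

Record spaceP (U : (nat -> Prop) -> Prop) (X : Type) (dX : X -> X -> R) := MkSpaceP {
 sx0 : X;
 sPhi : X -> X -> R;
 sh : R -> R;
 sconv : (nat -> X) -> X -> Prop;
 d_ge0 : forall p q, 0 <= dX p q;
 d_self : forall p, dX p p = 0;
 h_d : forall p q, sh (dX p q) = sPhi p q;
 h_mono : forall a b, 0 <= a -> a < b -> sh a < sh b;
 h_cont : forall r, 0 <= r -> forall e, 0 < e -> exists2 dl, 0 < dl &
    forall s, 0 <= s -> `|s - r| < dl -> `|sh s - sh r| < e;
 d_eq0 : forall p q, dX p q = 0 -> p = q;
 conv_Phi : forall pn qn p q, sconv pn p -> sconv qn q ->
    Ulim U (fun n => sPhi (pn n) (qn n)) (sPhi p q);
 conv_cst : forall p, sconv (fun _ => p) p;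
 s_compact : forall pn C, (forall n, dX (pn n) sx0 <= C) -> exists p, sconv pn p;
 homog : forall p, exists T : X -> X, bijective T /\
    (forall a b, dX (T a) (T b) = dX a b) /\ T p = sx0
}.

Arguments spaceP : clear implicits.

Definition lam (n : nat) : R := (1 + (n.+1%:R)^-1)%R.

Lemma lam_gt1 n : 1 < lam n.
Proof. by rewrite /lam ltrDl invr_gt0 ltr0n. Qed.

Lemma lam_le2 n : lam n <= 2.
Proof.
rewrite /lam; set t := (n.+1%:R)^-1; have : t <= 1.
  by rewrite /t invr_le1 ?unitfE ?pnatr_eq0 // ?ler1n // ltr0n.
lra.
Qed.

Lemma h_le U X dX (S : spaceP U X dX) a b : 0 <= a -> a <= b -> sh S a <= sh S b.
Proof.
move=> a0; rewrite le_eqVlt => /orP[/eqP->//|ab].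
by apply: ltW; apply: h_mono.
Qed.

Lemma h_inj U X dX (S : spaceP U X dX) a b : 0 <= a -> 0 <= b -> sh S a = sh S b -> a = b.
Proof.
move=> a0 b0 e; case: (ltgtP a b) => // ab.
  by have := h_mono S a0 ab; rewrite e ltxx.
by have := h_mono S b0 ab; rewrite e ltxx.
Qed.

Lemma h_le_inv U X dX (S : spaceP U X dX) a b : 0 <= a -> 0 <= b -> sh S a <= sh S b -> a <= b.
Proof.
move=> a0 b0 e; case: (lerP a b) => // ab.
by have := h_mono S b0 ab; rewrite ltNge e.
Qed.

Arguments h_le {U X dX} S {a b}.
Arguments h_inj {U X dX} S {a b}.
Arguments h_le_inv {U X dX} S {a b}.
Lemma Ulim_h U (HU : ufilter U) X dX (S : spaceP U X dX) (c : nat -> R) r :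
  0 <= r -> (forall n, 0 <= c n) ->
  (forall n, `|c n - 1| <= (n.+1%:R)^-1) ->
  Ulim U (fun n => sh S (c n * r)%R) (sh S r).
Proof.
move=> r0 c0 hc e e0; have [dl dl0 hdl] := h_cont S r0 e0.
pose N := Num.Def.archi_bound (r / dl).
apply: (uf_mono HU _ (uf_cof HU N)) => n Nn.
apply: hdl; first by apply: mulr_ge0.
have hN : r / dl < N%:R by apply: archi_boundP; apply: divr_ge0 => //; apply: ltW.
have : r / dl < n.+1%:R.
  apply: (lt_le_trans hN); rewrite ler_nat; apply: (leq_trans Nn); exact: leqnSn.
rewrite ltr_pdivrMr // => h1.
have -> : c n * r - r = (c n - 1) * r by ring.
rewrite normrM (ger0_norm r0).
have n0 : (0 : R) < n.+1%:R by rewrite ltr0n.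
have h3 : `|c n - 1| * r <= (n.+1%:R)^-1 * r by apply: ler_wpM2r.
have h4 : (n.+1%:R)^-1 * r < dl.
  by rewrite mulrC -(ltr_pM2r n0) -mulrA mulVf ?pnatr_eq0 // mulr1 mulrC.
move: h3 h4; set t := (n.+1%:R)^-1; lra.
Qed.

Lemma mdist_ge0 (Y : metric_space) (a b : Y) : 0 <= mdist a b.
Proof.
have := mdist_tri a b a; rewrite mdist_self mdist_sym => h.
lra.
Qed.

Lemma normalize U X dX (S : spaceP U X dX) (Y : metric_space) (l : R) (y0 : Y) :
  (exists f : X -> Y, bijective f /\ bi_lipschitz dX (@mdist Y) l f) ->
  exists G : Y -> X, G y0 = sx0 S /\
    (forall a b, dX (G a) (G b) <= l * mdist a b /\ mdist a b <= l * dX (G a) (G b)) /\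
    (forall x, exists y, G y = x).
Proof.
move=> [f [[g fg gf] [_ hbl]]].
have [T [[Ti TTi TiT] [Tiso Tg]]] := homog S (g y0).
exists (fun y => T (g y)); split => //; split.
  move=> a b; rewrite Tiso; case: (pselect (a = b)) => [->|ab].
    by rewrite (d_self S) mdist_self mulr0.
  have gab : g a <> g b by move=> e; apply: ab; rewrite -(gf a) -(gf b) e.
  by have [h1 h2] := hbl _ _ gab; rewrite !gf in h1 h2; split; apply: ltW.
by move=> x; exists (f (Ti x)); rewrite fg TiT.
Qed.

Lemma lam_inv n : `|(lam n)^-1 - 1| <= (n.+1%:R)^-1.
Proof.
have l1 := lam_gt1 n; have l0 : 0 < lam n by lra.
have : (lam n)^-1 * lam n = 1 by rewrite mulVf // gt_eqF.
move: l1 l0; rewrite /lam; set t := (n.+1%:R)^-1; set u := (1 + t)^-1 => l1 l0 hu.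
have t0 : 0 < t by rewrite /t invr_gt0 ltr0n.
rewrite ler_norml; apply/andP; split; nra.
Qed.

Lemma lam_c n : `|lam n - 1| <= (n.+1%:R)^-1.
Proof.
rewrite /lam; set t := (n.+1%:R)^-1.
have t0 : 0 < t by rewrite /t invr_gt0 ltr0n.
rewrite ler_norml; apply/andP; split; lra.
Qed.

Theorem generic U (HU : ufilter U) X dX (S : spaceP U X dX) :
  almost_isometry_unique dX.
Proof.
move=> Y HY.
have [f0 _] := HY 2 ltac:(lra).
pose y0 := f0 (sx0 S).
have : forall n, exists G : Y -> X, G y0 = sx0 S /\
    (forall a b, dX (G a) (G b) <= lam n * mdist a b /\ mdist a b <= lam n * dX (G a) (G b)) /\
    (forall x, exists y, G y = x).
  by move=> n; apply: normalize; apply: HY; apply: lam_gt1.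
move/boolp.choice => [G HG].
have G0 n : G n y0 = sx0 S by case: (HG n).
have B1 n a b : dX (G n a) (G n b) <= lam n * mdist a b by case: (HG n) => _ [/(_ a b) []].
have B2 n a b : mdist a b <= lam n * dX (G n a) (G n b) by case: (HG n) => _ [/(_ a b) []].
have GS n x : exists y, G n y = x by case: (HG n) => _ [].
have L0 n : 0 < lam n by have := lam_gt1 n; lra.
have L2 := lam_le2.
have gex : forall y, exists p, sconv S (fun n => G n y) p.
  move=> y; apply: (s_compact (C := 2 * mdist y y0)) => n.
  rewrite -(G0 n); have := B1 n y y0; have := L2 n; have := mdist_ge0 y y0; nra.
have [g hg] := boolp.choice gex.
have iso : forall a b, dX (g a) (g b) = mdist a b.
  move=> a b; have hc := conv_Phi (hg a) (hg b).
  have d0 := mdist_ge0 a b.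
  have up := Ulim_h HU S d0 (fun n => ltW (L0 n)) lam_c.
  have Li n : 0 <= (lam n)^-1 by rewrite invr_ge0 ltW.
  have lo := Ulim_h HU S d0 Li lam_inv.
  have e1 : sPhi S (g a) (g b) <= sh S (mdist a b).
    apply: (Ulim_le HU hc up) => n; rewrite -(h_d S); apply: (h_le S); first exact: (d_ge0 S).
    exact: B1.
  have e2 : sh S (mdist a b) <= sPhi S (g a) (g b).
    apply: (Ulim_le HU lo hc) => n; rewrite -(h_d S); apply: h_le.
      by apply: mulr_ge0 => //; rewrite invr_ge0 ltW.
    by rewrite ler_pdivrMl // B2.
  apply: (h_inj S (d_ge0 S (g a) (g b)) d0); rewrite (h_d S); apply/eqP; rewrite eq_le e1 e2.
  done.
have inj : forall a b, g a = g b -> a = b.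
  move=> a b e; case: (pselect (a = b)) => // ab.
  by have := mdist_pos ab; rewrite -iso e (d_self S) ltxx.
have surj : forall x, exists y, g y = x.
  move=> x; have [yn hyn] := boolp.choice (GS ^~ x).
  pose q n := G 0 (yn n).
  have qb : forall n, dX (q n) (sx0 S) <= 4 * dX x (sx0 S).
    move=> n; rewrite /q -{1}(G0 0).
    have h1 := B1 0 (yn n) y0; have h2 := B2 n (yn n) y0.
    rewrite hyn G0 in h2; have := L2 0; have := L2 n; have := mdist_ge0 (yn n) y0.
    have := d_ge0 S x (sx0 S); have := L0 0; nra.
  have [p hp] := s_compact qb.
  have [y hy] := GS 0 p.
  exists y; apply: (d_eq0 S).
  have hL := conv_Phi (hg y) (conv_cst S x).
  have hP := conv_Phi (conv_cst S p) hp.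
  have pp : sPhi S p p = sh S 0 by rewrite -(h_d S) (d_self S).
  rewrite pp in hP.
  have key : forall e, 0 < e -> sPhi S (g y) x <= sh S e.
    move=> e e0.
    have e4 : 0 < e / 4 by lra.
    have := Ulim_lt HU hP (h_mono S (lexx 0) e4).
    move=> hU; apply: (Ulim_leU HU hL).
    move: hU; apply: (uf_mono HU) => n hn.
    have dq : dX p (q n) < e / 4.
      case: (ltP (dX p (q n)) (e / 4)) => // le.
      by have := h_le S (ltW e4) le; rewrite (h_d S) leNgt hn.
    rewrite -(hyn n) -(h_d S); apply: (h_le S); first exact: (d_ge0 S).
    have h1 := B1 n y (yn n); have h2 := B2 0 y (yn n).
    rewrite hy in h2; rewrite /q in dq.
    have := L2 0; have := L2 n; have := L0 n; have := mdist_ge0 y (yn n).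
    have := d_ge0 S p (G 0 (yn n)); nra.
  have k0 : sPhi S (g y) x <= sh S 0.
    case: (lerP (sPhi S (g y) x) (sh S 0)) => // lt.
    have lt' : 0 < sPhi S (g y) x - sh S 0 by rewrite subr_gt0.
    have [dl dl0 hdl] := h_cont S (lexx 0) lt'.
    have dl2 : 0 < dl / 2 by lra.
    have := key _ dl2; have := hdl (dl / 2) (ltW dl2).
    rewrite subr0 gtr0_norm // ltr_norml.
    have : dl / 2 < dl by lra.
    move=> h /(_ h) /andP[_ h3]; lra.
  rewrite -(h_d S) in k0.
  have := h_le_inv S (d_ge0 S _ _) (lexx 0) k0.
  have := d_ge0 S (g y) x; lra.
have [fi hfi] := boolp.choice surj.
exists fi; split.
  by exists g => [x|y]; [rewrite hfi|apply: inj; rewrite hfi].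
by move=> a b; rewrite -iso !hfi.
Qed.

Lemma ufilter_ex : exists U, ufilter U.
Proof.
have [G [GU sFG]] := ultraFilterLemma (@eventually_filter).
exists G; split.
- move=> P Q PQ; apply: filterS => n; exact: PQ.
- move=> P Q GP GQ; exact: (filterI GP GQ).
- move=> P GP; case: (pselect (exists n, P n)) => // nP; exfalso; apply: (@filter_not_empty _ G _).
  suff -> : (set0 : set nat) = P by [].
  apply/seteqP; split => n //= Pn; apply: nP; by exists n.
- move=> P; have [] := in_ultra_setVsetC P GU; [left|right] => //.
- move=> N; apply: sFG; exists N => //.
Qed.

Definition ePhi d (p q : euclid d) : R := (\sum_(i < d) (p i - q i) ^+ 2)%R.

Lemma ePhi_ge0 d (p q : euclid d) : 0 <= ePhi p q.
Proof. by apply: sumr_ge0 => i _; apply: sqr_ge0. Qed.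

Lemma sqrt_ge0' (x : R) : 0 <= sqrt x.
Proof. by apply/RleP; apply: sqrt_pos. Qed.

Lemma sqrt_sq (x : R) : 0 <= x -> (sqrt x) ^+ 2 = x.
Proof. by move=> /RleP x0; rewrite expr2 -RmultE sqrt_sqrt. Qed.

Lemma term_le d (F : 'I_d -> R) i : (forall j, 0 <= F j) -> F i <= \sum_(j < d) F j.
Proof.
move=> F0; rewrite (bigD1 i) //= lerDl; apply: sumr_ge0 => j _; exact: F0.
Qed.

Lemma sq_cont (r : R) : 0 <= r -> forall e, 0 < e -> exists2 dl, 0 < dl &
    forall s, 0 <= s -> `|s - r| < dl -> `|s ^+ 2 - r ^+ 2| < e.
Proof.
move=> r0 e e0.
have K0 : 0 < 2 * r + 1 by lra.
pose dl := Num.min 1 (e / (2 * r + 1)).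
have d0 : 0 < dl by rewrite /dl lt_min ltr01 /= divr_gt0.
have d1 : dl <= 1 by rewrite /dl ge_min lexx.
have dK : dl * (2 * r + 1) <= e.
  have : dl <= e / (2 * r + 1) by rewrite /dl ge_min lexx orbT.
  by rewrite ler_pdivlMr.
exists dl => // s s0 sr.
have -> : s ^+ 2 - r ^+ 2 = (s - r) * (s + r) by rewrite !expr2; ring.
rewrite normrM (ger0_norm (addr_ge0 s0 r0)).
move: sr; rewrite ltr_norml => /andP[a b].
have : `|s - r| < dl by rewrite ltr_norml a b.
move=> c; have := normr_ge0 (s - r); nra.
Qed.

Lemma Ulim_sq U (HU : ufilter U) d (pn qn : nat -> euclid d) p q :
  (forall i, Ulim U (fun n => pn n i) (p i)) ->
  (forall i, Ulim U (fun n => qn n i) (q i)) ->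
  Ulim U (fun n => ePhi (pn n) (qn n)) (ePhi p q).
Proof.
move=> hp hq; rewrite /ePhi.
apply: (Ulim_sum HU (F := fun i n => (pn n i - qn n i) ^+ 2)) => i.
rewrite expr2; under eq_fun do rewrite expr2.
have h : Ulim U (fun n => pn n i - qn n i) (p i - q i).
  by apply: Ulim_add => //; apply: Ulim_opp.
exact: Ulim_mul.
Qed.

Lemma euclid_spaceP U (HU : ufilter U) d :
  spaceP U (euclid d) (@euclid_dist d).
Proof.
refine (@MkSpaceP U (euclid d) (@euclid_dist d) (fun _ => 0%R) (@ePhi d) (fun t : R => (t ^+ 2)%R)
  (fun pn p => forall i, Ulim U (fun n => pn n i) (p i)) _ _ _ _ _ _ _ _ _ _).
- by move=> p q; apply: sqrt_ge0'.
- move=> p; rewrite /euclid_dist big1 ?sqrt_0 // => i _.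
  by rewrite subrr expr0n.
- by move=> p q; rewrite /euclid_dist sqrt_sq //; apply: ePhi_ge0.
- move=> a b a0 ab; rewrite !expr2; nra.
- exact: sq_cont.
- move=> p q h.
  have S0 : ePhi p q = 0.
    by apply: sqrt_eq_0 => //; apply/RleP; apply: ePhi_ge0.
  apply: funext => i; apply/eqP; rewrite -subr_eq0 -(sqrf_eq0 (p i - q i)); apply/eqP.
  have := (psumr_eq0P (P := xpredT) (F := fun j : 'I_d => (p j - q j) ^+ 2)); move=> /(_ (fun j _ => sqr_ge0 _) S0 i isT) /= -> //.
- move=> pn qn p q; exact: Ulim_sq.
- by move=> p i; apply: Ulim_cst.
- move=> pn C hC.
  have bnd : forall i n, `|pn n i| <= C ^+ 2 + 1.
    move=> i n; have h := hC n.
    have S0 := ePhi_ge0 (pn n) (fun _ => 0).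
    have sS := sqrt_sq S0.
    have s0 := sqrt_ge0' (ePhi (pn n) (fun _ => 0)).
    have t := @term_le d (fun j => (pn n j - 0) ^+ 2) i (fun j => sqr_ge0 _).
    move: h; rewrite /euclid_dist => h.
    rewrite /ePhi in sS s0 S0.
    move: t sS s0 h; rewrite subr0 -/(ePhi (pn n) (fun _ => 0)).
    set S := ePhi _ _; set r := sqrt S; set x := pn n i.
    move=> t sS s0 h.
    rewrite ler_norml; apply/andP; split; rewrite !expr2 in t sS *; nra.
  have ex : forall i, exists L, Ulim U (fun n => pn n i) L.
    by move=> i; apply: (Ulim_ex HU (bnd i)).
  have [p hp] := boolp.choice ex.
  by exists p.
- move=> p; exists (fun z i => z i - p i); split.
    by exists (fun z i => z i + p i) => z; apply: funext => i /=; rewrite ?subrK ?addrK.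
  split.
    move=> a b; rewrite /euclid_dist; congr sqrt; apply: eq_bigr => i _.
    congr (_ ^+ 2); ring.
  by apply: funext => i; rewrite subrr.
Qed.

Definition vdot d (v w : 'I_d -> R) : R := (\sum_(i < d) v i * w i)%R.

Lemma minkE d (p q : R * ('I_d -> R)) : minkowski p q = p.1 * q.1 - vdot p.2 q.2.
Proof. by rewrite /minkowski RminusE RmultE. Qed.

Lemma vdotC d (v w : 'I_d -> R) : vdot v w = vdot w v.
Proof. by apply: eq_bigr => i _; rewrite mulrC. Qed.

Lemma vdot_lin d (v n w : 'I_d -> R) a :
  vdot (fun i => v i - a * n i) w = vdot v w - a * vdot n w.
Proof.
rewrite /vdot mulr_sumr -sumrB; apply: eq_bigr => i _; ring.
Qed.

Lemma vdot_ge0 d (v : 'I_d -> R) : 0 <= vdot v v.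
Proof. by apply: sumr_ge0 => i _; rewrite -expr2 sqr_ge0. Qed.

Lemma vdot_eq0 d (v : 'I_d -> R) : vdot v v = 0 -> v = (fun _ => 0).
Proof.
move=> h; apply: funext => i.
have sq j : 0 <= v j * v j by rewrite -expr2 sqr_ge0.
have := psumr_eq0P (P := xpredT) (F := fun j : 'I_d => v j * v j)
   (fun j _ => sq j) h.
by move=> /(_ i isT) /eqP; rewrite mulf_eq0 orbb => /eqP.
Qed.

Lemma vdot_exp d (a b : 'I_d -> R) x y :
  vdot (fun i => x * a i - y * b i) (fun i => x * a i - y * b i) =
  x ^+ 2 * vdot a a - 2 * x * y * vdot a b + y ^+ 2 * vdot b b.
Proof.
rewrite /vdot (eq_bigr (fun i => (x ^+ 2 * (a i * a i) - (2 * x * y) * (a i * b i))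
   + y ^+ 2 * (b i * b i))); last by move=> i _; ring.
by rewrite big_split sumrB -!mulr_sumr.
Qed.

Lemma vCS d (a b : 'I_d -> R) : vdot a b ^+ 2 <= vdot a a * vdot b b.
Proof.
have h := vdot_ge0 (fun i => vdot b b * a i - vdot a b * b i).
rewrite vdot_exp in h.
have A0 := vdot_ge0 b.
move: h A0.
set A := vdot b b; set C := vdot a b; set Va := vdot a a => h A0.
case: (ltgtP 0 A) => [Ap|An|A0'].
- rewrite !expr2 in h *; nra.
- lra.
have b0 : b = (fun _ => 0) by apply: vdot_eq0; rewrite -/A A0'.
  have -> : C = 0 by rewrite /C b0 /vdot big1 // => i _; rewrite mulr0.
  by rewrite -A0' expr0n mulr0.
Qed.

Definition Hp d (p : R * ('I_d -> R)) := 0 < p.1 /\ minkowski p p = 1.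

Lemma Hp_sq d (p : R * ('I_d -> R)) : Hp p -> vdot p.2 p.2 = p.1 ^+ 2 - 1.
Proof. by case=> _; rewrite minkE => h; rewrite expr2; lra. Qed.

Lemma hyp_ge1 d (p q : R * ('I_d -> R)) : Hp p -> Hp q -> 1 <= minkowski p q.
Proof.
move=> hp hq; have ep := Hp_sq hp; have eq := Hp_sq hq.
case: hp => t0 _; case: hq => s0 _.
have cs := vCS p.2 q.2.
rewrite minkE; rewrite ep eq in cs.
have vp := vdot_ge0 p.2; have vq := vdot_ge0 q.2.
rewrite ep in vp; rewrite eq in vq.
move: cs vp vq t0 s0; set t := p.1; set s := q.1; set C := vdot p.2 q.2.
rewrite !expr2 => cs vp vq t0 s0.
have t1 : 1 <= t by nra.
have s1 : 1 <= s by nra.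
have ts1 : 1 <= t * s by nra.
have k : (t * s - 1) * (t * s - 1) - (t * t - 1) * (s * s - 1) = (t - s) * (t - s) by ring.
case: (lerP C (t * s - 1)) => [|h]; first lra.
have : (t * s - 1) * (t * s - 1) < C * C.
  have u0 : 0 <= t * s - 1 by lra.
  move: h u0; set u := t * s - 1 => h u0.
  have : 0 < (C - u) * (C + u) by apply: mulr_gt0; lra.
  nra.
have ss : 0 <= (t - s) * (t - s) by rewrite -expr2 sqr_ge0.
lra.
Qed.

Lemma hyp_eq1 d (p q : R * ('I_d -> R)) : Hp p -> Hp q -> minkowski p q = 1 -> p = q.
Proof.
move=> hp hq; have ep := Hp_sq hp; have eq := Hp_sq hq.
case: (hp) => t0 _; case: (hq) => s0 _.
have cs := vCS p.2 q.2.
rewrite minkE => e.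
have ex := vdot_exp p.2 q.2 1 1.
have vp := vdot_ge0 p.2; have vq := vdot_ge0 q.2.
rewrite ep eq in cs vp vq ex.
move: cs vp vq t0 s0 e ex; case: p {hp ep} => t v; case: q {hq eq} => s w /=.
set C := vdot v w; rewrite !expr2 !mul1r => cs vp vq t0 s0 e ex.
have ts : t = s.
  have k : (t * s - 1) * (t * s - 1) - (t * t - 1) * (s * s - 1) = (t - s) * (t - s) by ring.
  have hC : C = t * s - 1 by lra.
  rewrite hC in cs; nra.
subst s.
have v0 := vdot_eq0 (v := fun i => v i - w i).
have vw : v = w.
  apply: funext => i; apply/eqP; rewrite -subr_eq0; apply/eqP.
  have := v0; rewrite (_ : vdot _ _ = 0).
    by move=> /(_ erefl) /(congr1 (fun f => f i)).
  have -> : (fun i => v i - w i) = (fun i => 1 * v i - 1 * w i).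
    by apply: funext => j; rewrite !mul1r.
  rewrite ex; lra.
by rewrite vw.
Qed.

Lemma hyp_eq d (x y : hyperbolic d) : sval x = sval y -> x = y.
Proof.
case: x => px hx; case: y => py hy /= e; subst py.
by congr exist; apply: Prop_irrelevance.
Qed.

Lemma exp_gt0' (x : R) : 0 < exp x.
Proof. by apply/RltP; apply: exp_pos. Qed.

Lemma exp_lt' (a b : R) : a < b -> exp a < exp b.
Proof. by move/RltP => h; apply/RltP; apply: exp_increasing. Qed.

Lemma exp0' : exp (0%R) = (1%R).
Proof. by have := exp_0; rewrite !RealsE. Qed.

Lemma exp_ge1 (a : R) : 0 <= a -> 1 <= exp a.
Proof.
rewrite le_eqVlt => /orP[/eqP<-|h]; first by rewrite exp0'.
by rewrite -exp0'; apply: ltW; apply: exp_lt'.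
Qed.

Lemma cosh_eq (x : R) : cosh x = ((exp x + (exp x)^-1) / 2)%R.
Proof.
rewrite /cosh exp_Ropp RdivE RplusE RinvE.
congr (_ / _); by rewrite RealsE.
Qed.

Lemma cosh_mono (a b : R) : 0 <= a -> a < b -> cosh a < cosh b.
Proof.
move=> a0 ab; rewrite !cosh_eq.
have A1 := exp_ge1 a0; have AB := exp_lt' ab.
move: A1 AB; set A := exp a; set B := exp b => A1 AB.
have A0 : A != 0 by apply/eqP => h; rewrite h in A1; lra.
have B0 : B != 0 by apply/eqP => h; rewrite h in AB; lra.
have iA : A * A^-1 = 1 by rewrite mulfV.
have iB : B * B^-1 = 1 by rewrite mulfV.
have iA0 : 0 < A^-1 by rewrite invr_gt0; lra.
have iB0 : 0 < B^-1 by rewrite invr_gt0; lra.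
have iA1 : A^-1 <= 1 by rewrite invr_le1 // ?unitfE //; lra.
have iB1 : B^-1 < 1 by rewrite invf_lt1; lra.
have k : A^-1 - B^-1 = (B - A) * (A^-1 * B^-1).
  have : A^-1 * B^-1 * B = A^-1 by rewrite -mulrA mulVf // mulr1.
  have : A^-1 * B^-1 * A = B^-1 by rewrite mulrC mulrA iA mul1r.
  move=> h1 h2; rewrite mulrBl [_ * (_ * _)]mulrC h2 [A * _]mulrC h1.
  done.
have p1 : A^-1 * B^-1 < 1 by nra.
have hpos : 0 < (B - A) * (1 - A^-1 * B^-1) by apply: mulr_gt0; lra.
have : A + A^-1 < B + B^-1.
  move: k hpos; set u := A^-1 * B^-1; set ia := A^-1; set ib := B^-1; nra.
lra.
Qed.





Lemma ln_ge0 (a : R) : 1 <= a -> 0 <= ln a.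
Proof.
move=> a1; rewrite leNgt; apply/negP => h.
have a0 : (0 < a)%R by lra.
have := exp_lt' h; rewrite exp0' exp_ln; first lra.
by apply/RltP.
Qed.

Lemma arcoshE (M : R) : arcosh M = ln (M + sqrt (M ^+ 2 - 1)%R)%R.
Proof. by rewrite /arcosh RplusE RminusE R1E. Qed.

Lemma arcosh_ge0 (M : R) : 1 <= M -> 0 <= arcosh M.
Proof.
move=> M1; rewrite arcoshE; apply: ln_ge0.
have := sqrt_ge0' (M ^+ 2 - 1)%R; lra.
Qed.

Lemma cosh_arcosh (M : R) : 1 <= M -> cosh (arcosh M) = M.
Proof.
move=> M1; rewrite arcoshE cosh_eq.
have r0 := sqrt_ge0' (M ^+ 2 - 1)%R.
have rs : sqrt (M ^+ 2 - 1)%R ^+ 2 = M ^+ 2 - 1.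
  by apply: sqrt_sq; rewrite expr2; nra.
move: r0 rs; set r := sqrt _ => r0 rs.
have a0 : (0 < M + r)%R by lra.
rewrite exp_ln; last by apply/RltP.
have -> : (M + r)^-1 = M - r.
  apply: (@mulrI _ (M + r)); first by rewrite unitfE; lra.
  rewrite mulfV; last by lra.
  rewrite !expr2 in rs; nra.
lra.
Qed.

Lemma arcosh1 : arcosh 1%R = 0.
Proof.
by rewrite arcoshE expr1n subrr -R0E sqrt_0 R0E addr0 -R1E ln_1.
Qed.

Lemma cosh_cont (r : R) : 0 <= r -> forall e, 0 < e -> exists2 dl, 0 < dl &
    forall s, 0 <= s -> `|s - r| < dl -> `|cosh s - cosh r| < e.
Proof.
move=> r0 e e0.
have := derivable_continuous_pt _ _ (derivable_pt_cosh r).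
have e0' : Rlt 0 e by apply/RltP.
move=> /(_ e e0') [dl [/RltP dl0 H]].
exists dl => // s s0 sr.
case: (pselect (s = r)) => [->|sr']; first by rewrite subrr normr0.
have := H s; rewrite /= /R_dist !RabsE !RminusE => /(_ _) /RltP; apply.
split => //; [split => //; by move=> h; apply: sr'|by apply/RltP].
Qed.

Definition axpy d (x n : R * ('I_d -> R)) (a : R) : R * ('I_d -> R) :=
  ((x.1 - a * n.1)%R, fun i => (x.2 i - a * n.2 i)%R).

Lemma mink_sym d (x y : R * ('I_d -> R)) : minkowski x y = minkowski y x.
Proof. by rewrite !minkE mulrC vdotC. Qed.

Lemma mink_axpy d (x n y : R * ('I_d -> R)) a :
  minkowski (axpy x n a) y = minkowski x y - a * minkowski n y.
Proof. rewrite !minkE /axpy /= vdot_lin; ring. Qed.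

Lemma mink_axpy_r d (x n y : R * ('I_d -> R)) a :
  minkowski y (axpy x n a) = minkowski y x - a * minkowski y n.
Proof. by rewrite mink_sym mink_axpy ![minkowski _ y]mink_sym. Qed.

Definition refl d (n x : R * ('I_d -> R)) : R * ('I_d -> R) :=
  axpy x n (2 * minkowski x n / minkowski n n)%R.

Lemma refl_iso d (n x y : R * ('I_d -> R)) : minkowski n n != 0 ->
  minkowski (refl n x) (refl n y) = minkowski x y.
Proof.
move=> n0; rewrite /refl mink_axpy !mink_axpy_r.
rewrite [minkowski n y]mink_sym.
by field.
Qed.

Lemma axpy_axpy d (x n : R * ('I_d -> R)) a :
  axpy (axpy x n a) n (- a)%R = x.
Proof.
case: x => t v; rewrite /axpy /=; congr pair; first ring.
by apply: funext => i; ring.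
Qed.

Lemma refl_invol d (n x : R * ('I_d -> R)) : minkowski n n != 0 ->
  refl n (refl n x) = x.
Proof.
move=> n0; rewrite {1}/refl.
have -> : (2 * minkowski (refl n x) n / minkowski n n)%R =
    - (2 * minkowski x n / minkowski n n)%R.
  by rewrite /refl mink_axpy; field.
exact: axpy_axpy.
Qed.

Definition e0 d : R * ('I_d -> R) := (1%R, fun _ => 0%R).

Lemma mink_e d (x : R * ('I_d -> R)) : minkowski x (e0 d) = x.1.
Proof.
rewrite minkE /e0 /= mulr1 /vdot big1 ?subr0 // => i _; exact: mulr0.
Qed.

Lemma Hp_e d : Hp (e0 d).
Proof. by split; [rewrite /e0 /= ltr01|rewrite mink_e]. Qed.

Lemma refl_H d (p x : R * ('I_d -> R)) :
  Hp p -> minkowski (axpy p (e0 d) 1%R) (axpy p (e0 d) 1%R) != 0 ->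
  refl (axpy p (e0 d) 1%R) p = e0 d -> Hp x -> Hp (refl (axpy p (e0 d) 1%R) x).
Proof.
move=> hp n0 rp hx; split; last by rewrite refl_iso //; case: hx.
have := mink_e (refl (axpy p (e0 d) 1%R) x).
move: rp n0; set n := axpy p (e0 d) 1%R => rp n0.
rewrite -{1}rp refl_iso // => <-.
have := hyp_ge1 hx hp; lra.
Qed.

Definition hx0 d : hyperbolic d := exist _ (e0 d) (Hp_e d).

Lemma mink_e_l d (x : R * ('I_d -> R)) : minkowski (e0 d) x = x.1.
Proof. by rewrite mink_sym mink_e. Qed.

Lemma mink_ee d : minkowski (e0 d) (e0 d) = 1.
Proof. by rewrite mink_e. Qed.

Lemma hyp_homog d (p : hyperbolic d) : exists T : hyperbolic d -> hyperbolic d,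
  bijective T /\ (forall a b, hyperbolic_dist (T a) (T b) = hyperbolic_dist a b) /\
  T p = hx0 d.
Proof.
case: p => p hp.
have hp' : Hp p := hp.
have ep := Hp_sq hp'.
case: (pselect (p.1 = 1)) => [p1|p1].
  exists id; split; first by exists id.
  split => //; apply: hyp_eq => /=.
  rewrite p1 expr1n subrr in ep; have := vdot_eq0 ep.
  by case: p {hp hp' ep} p1 => t v /= -> ->.
pose n := axpy p (e0 d) 1%R.
have Bnn : minkowski n n = 2 - 2 * p.1.
  rewrite /n mink_axpy !mink_axpy_r mink_e mink_e_l mink_ee.
  by case: hp' => _ ->; ring.
have n0 : minkowski n n != 0 by rewrite Bnn; apply/eqP => h; apply: p1; lra.
have Bpn : minkowski p n = 1 - p.1.
  by rewrite /n mink_axpy_r mink_e; case: hp' => _ ->; ring.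
have rp : refl n p = e0 d.
  rewrite /refl Bpn Bnn.
  have -> : (2 * (1 - p.1) / (2 - 2 * p.1))%R = 1.
    by field; apply/eqP => h; apply: p1; lra.
  rewrite /n /axpy /e0 /=; congr pair; first ring.
  by apply: funext => i; ring.
have Hx : forall x, Hp x -> Hp (refl n x) by move=> x hx; apply: refl_H.
pose T := fun x : hyperbolic d => exist _ (refl n (sval x)) (Hx _ (svalP x)) : hyperbolic d.
exists T; split.
  by exists T => x; apply: hyp_eq => /=; rewrite refl_invol.
split.
  by move=> a b; rewrite /hyperbolic_dist /= refl_iso.
by apply: hyp_eq => /=.
Qed.

Lemma Ulim_mink U (HU : ufilter U) d (pn qn : nat -> R * ('I_d -> R)) p q :
  Ulim U (fun n => (pn n).1) p.1 -> (forall i, Ulim U (fun n => (pn n).2 i) (p.2 i)) ->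
  Ulim U (fun n => (qn n).1) q.1 -> (forall i, Ulim U (fun n => (qn n).2 i) (q.2 i)) ->
  Ulim U (fun n => minkowski (pn n) (qn n)) (minkowski p q).
Proof.
move=> h1 h2 h3 h4.
rewrite minkE; under eq_fun do rewrite minkE.
apply: Ulim_add => //; first exact: Ulim_mul.
apply: Ulim_opp => //.
apply: (Ulim_sum HU (F := fun i n => (pn n).2 i * (qn n).2 i)) => i.
exact: Ulim_mul.
Qed.

Lemma cosh0' : cosh 0%R = 1.
Proof. rewrite cosh_eq exp0' invr1; lra. Qed.



Lemma hyp_spaceP U (HU : ufilter U) d :
  spaceP U (hyperbolic d) (@hyperbolic_dist d).
Proof.
pose cv := fun (pn : nat -> hyperbolic d) (p : hyperbolic d) =>
  Ulim U (fun n => (sval (pn n)).1) (sval p).1 /\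
  forall i, Ulim U (fun n => (sval (pn n)).2 i) ((sval p).2 i).
have ge1 : forall x y : hyperbolic d, 1 <= minkowski (sval x) (sval y).
  by move=> x y; apply: hyp_ge1; [exact: (svalP x)|exact: (svalP y)].
refine (@MkSpaceP U (hyperbolic d) (@hyperbolic_dist d) (hx0 d)
  (fun x y => minkowski (sval x) (sval y)) cosh cv _ _ _ _ _ _ _ _ _ _).
- by move=> p q; apply: arcosh_ge0.
- by move=> p; rewrite /hyperbolic_dist (svalP p).2 arcosh1.
- by move=> p q; apply: cosh_arcosh.
- exact: cosh_mono.
- exact: cosh_cont.
- move=> p q; rewrite /hyperbolic_dist => h.
  have := cosh_arcosh (ge1 p q); rewrite h cosh0' => h1.
  apply: hyp_eq; apply: hyp_eq1 => //; [exact: (svalP p)|exact: (svalP q)].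
- move=> pn qn p q [h1 h2] [h3 h4]; exact: Ulim_mink.
- by move=> p; split => [|i]; apply: Ulim_cst.
- move=> pn C hC.
  pose t n := (sval (pn n)).1; pose v n := (sval (pn n)).2.
  have hpn n : Hp (sval (pn n)) := svalP (pn n).
  have C0 : 0 <= C.
    by have := hC 0; rewrite /hyperbolic_dist; have := arcosh_ge0 (ge1 (pn 0) (hx0 d)); lra.
  have tK n : t n <= cosh C.
    have h := hC n; rewrite /hyperbolic_dist /= mink_e in h.
    have t1 := ge1 (pn n) (hx0 d); rewrite /= mink_e in t1.
    rewrite /t -(cosh_arcosh t1).
    move: h; rewrite le_eqVlt => /orP[/eqP->//|h].
    by apply: ltW; apply: cosh_mono => //; apply: arcosh_ge0.
  have t0 n : 0 < t n by case: (hpn n).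
  have bt n : `|t n| <= cosh C by rewrite ger0_norm ?tK // ltW.
  have [T hT] := Ulim_ex HU bt.
  have bv i n : `|v n i| <= cosh C ^+ 2 + 1.
    have e := Hp_sq (hpn n).
    have sq j : 0 <= v n j * v n j by rewrite -expr2 sqr_ge0.
    have tl := term_le (F := fun j => v n j * v n j) i sq.
    have tt := tK n; have := t0 n.
    rewrite /vdot -/(v n) in e; rewrite e -/(t n) in tl.
    move: tl tt; set x := v n i; set y := t n; set K := cosh C.
    rewrite !expr2 => tl tt y0.
    rewrite ler_norml; apply/andP; split; nra.
  have [V hV] := boolp.choice (fun i => Ulim_ex HU (u := fun n => v n i) (bv i)).
  pose P := (T, V) : R * ('I_d -> R).
  have hB := Ulim_mink HU (pn := fun n => sval (pn n)) (qn := fun n => sval (pn n))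
    (p := P) (q := P) hT hV hT hV.
  have : (fun n => minkowski (sval (pn n)) (sval (pn n))) = fun _ => 1.
    by apply: funext => n; case: (hpn n).
  move=> e1; rewrite e1 in hB.
  have BPP := Ulim_uniq HU hB (Ulim_cst HU 1%R).
  have T0 : 0 <= T.
    by apply: (Ulim_le HU (Ulim_cst HU 0%R) hT) => n; apply: ltW.
  have HP : Hp P.
    split; last exact: BPP.
    move: BPP; rewrite minkE /= => BPP.
    have := vdot_ge0 V; rewrite /=; nra.
  exists (exist _ P HP); split => //=.
- exact: hyp_homog.
Qed.

Theorem corollary3p2 (d : nat) (hd : (1 <= d)%N) :
  almost_isometry_unique (@euclid_dist d) /\
  almost_isometry_unique (@hyperbolic_dist d).
Proof.
have [U HU] := ufilter_ex.
split; [exact: (generic HU (euclid_spaceP HU d))|exact: (generic HU (hyp_spaceP HU d))].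
Qed.
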